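(* There exists a constant $C$, independent of $h$, $T$, the interface location and $\beta^\pm$, such that for every $T\in\mathcal T_h^i$ and every $v_h\in S_h(T)$, with polynomial components $v_h^\pm\in\mathbb Q_1$ regarded as functions on $\omega_T$, $$\|\beta^+\nabla v_h^+\cdot\bar{\mathbf n}-\beta^-\nabla v_h^-\cdot\bar{\mathbf n}\|_{L^2(\tau_{\omega_T})}\le C(\beta^+-\beta^-)h^{1/2}|v_h^s|_{H^2(\omega_T)}\quad\text{for } s=+ \text{ and for } s=-.$$
   Context: $\mathbb Q_1$ is the space of trilinear polynomials. $\Gamma$ is a closed $C^2$ surface separating a bounded domain $\Omega\subset\mathbb R^3$ (a union of finitely many rectangular parallelepipeds) into $\Omega^\pm$, with reach $r_\Gamma$ (largest $r$ such that normal segments of length $2r$ centered at distinct points of $\Gamma$ are disjoint); $\beta=\beta^\pm>0$ on $\Omega^\pm$ with $\beta^+\ge\beta^-$. $\mathcal T_h$ is a Cartesian mesh by cubes of edge length $h$ with $h<r_\Gamma/(3\sqrt3)$, $\Gamma$ meeting every mesh edge in at most one point and the boundary of every mesh face in at most two points, no vertex on $\Gamma$. $\mathcal T_h^i$ is the set of elements meeting $\Gamma$, $\omega_T$ the union of elements $T'$ with $\overline{T'}\cap\overline T\ne\emptyset$, $T^\pm=T\cap\Omega^\pm$. For $T\in\mathcal T_h^i$, $K_T$ is the triangle spanned by three points where $\Gamma$ meets edges of $T$, selected as: if $\Gamma$ cuts 3 faces, all three; if $\Gamma$ cuts 4 faces separating the endpoints of an edge $e$ from the other vertices, the three farthest from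 $e$; if the four points lie on four parallel edges, any three; if $\Gamma$ cuts 5 faces, the three on parallel edges; if $\Gamma$ cuts 6 faces, every other one of the six (on three mutually orthogonal edges). $\tau(T)$ is the plane of $K_T$, $\bar{\mathbf n}$ its unit normal, $F$ the centroid of $K_T$, $L(X)=(X-D)\cdot\bar{\mathbf n}$ with $D$ a vertex of $K_T$, $\tau_{\omega_T}=\omega_T\cap\tau(T)$. $\mathcal C_T(p)=p+\left(\frac{\beta^-}{\beta^+}-1\right)(\nabla p(F)\cdot\bar{\mathbf n})L$, and $S_h(T)$ consists of the functions $v_h$ with $v_h^-:=v_h|_{T^-}=p$ and $v_h^+:=v_h|_{T^+}=\mathcal C_T(p)$ for some $p\in\mathbb Q_1$. *)

(* Defs.v *)
From HB Require Import structures.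
From mathcomp Require Import all_boot all_order all_algebra.
From mathcomp Require Import all_classical all_reals all_analysis.
Import Order.TTheory GRing.Theory Num.Theory numFieldNormedType.Exports.

Set Implicit Arguments.
Unset Strict Implicit.
Unset Printing Implicit Defensive.

Local Open Scope classical_set_scope.
Local Open Scope ring_scope.

Section Defs.
Variable R : realType.

Definition pt := 'rV[R]_3.
Definition idx := 'rV[int]_3.

Definition i0 : 'I_3 := inord 0.
Definition i1 : 'I_3 := inord 1.
Definition i2 : 'I_3 := inord 2.

Definition mk3 (x y z : R) : pt := \row_(i < 3) [:: x; y; z]`_i.

Definition dot (u v : pt) : R := \sum_(i < 3) u ord0 i * v ord0 i.
Definition enorm (u : pt) : R := Num.sqrt (dot u u).
Definition dist_set (x : pt) (E : set pt) : R := inf [set enorm (x - y) | y in E].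

Definition ev (i : 'I_3) : pt := delta_mx ord0 i.
Definition pd (i : 'I_3) (f : pt -> R) : pt -> R := fun x => 'D_(ev i) f x.
Definition gradv (f : pt -> R) (x : pt) : pt := \row_(i < 3) pd i f x.
Definition grad_dot (f : pt -> R) (x n : pt) : R := \sum_(i < 3) pd i f x * n ord0 i.

Definition Q1 (p : pt -> R) : Prop :=
  exists c : 'I_2 -> 'I_2 -> 'I_2 -> R, forall x : pt,
    p x = \sum_(a < 2) \sum_(b < 2) \sum_(e < 2)
            c a b e * x ord0 i0 ^+ a * x ord0 i1 ^+ b * x ord0 i2 ^+ e.

Definition leb3 := (((@lebesgue_measure R) \x (@lebesgue_measure R)) \x (@lebesgue_measure R))%E.
Definition leb2 := ((@lebesgue_measure R) \x (@lebesgue_measure R))%E.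

Definition int3 (A : set pt) (f : pt -> R) : \bar R :=
  (\int[leb3]_(q in [set q | A (mk3 q.1.1 q.1.2 q.2)]) (f (mk3 q.1.1 q.1.2 q.2))%:E)%E.

Definition H2semi_sq (A : set pt) (v : pt -> R) : \bar R :=
  (\sum_(i < 3) \sum_(j < 3) int3 A (fun x => ((pd i (pd j v) x) ^+ 2)%R))%E.

(** Squared L^2 norm on the planar set  A \cap {D + s u + t w}, where (u, w) is
    an orthonormal frame of the plane: the surface measure of the plane is the
    image of Lebesgue measure on R^2 by (s,t) |-> D + s u + t w. *)
Definition planeL2_sq (D u w : pt) (A : set pt) (g : pt -> R) : \bar R :=
  (\int[leb2]_(q in [set q | A (D + q.1 *: u + q.2 *: w)%R])
      ((g (D + q.1 *: u + q.2 *: w)) ^+ 2)%R%:E)%E.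

Definition ivec (k : idx) : pt := map_mx (fun z : int => z%:~R) k.
Definition eidx (i : 'I_3) : idx := delta_mx ord0 i.
Definition vtx (o : pt) (h : R) (k : idx) : pt := o + h *: ivec k.
Definition cube (o : pt) (h : R) (k : idx) : set pt :=
  [set x | forall i : 'I_3, vtx o h k ord0 i <= x ord0 i <= vtx o h k ord0 i + h].
Definition bin (d : idx) : Prop := forall i : 'I_3, d ord0 i = 0 \/ d ord0 i = 1.
Definition is_vertex (o : pt) (h : R) (k : idx) (x : pt) : Prop :=
  exists d, bin d /\ x = vtx o h (k + d).
Definition segment (a b : pt) : set pt := [set a + t *: (b - a) | t in `[0, 1]%classic].
(* the edge of cube k starting at vertex k+d in direction i (requires d_i = 0) *)
Definition edge (o : pt) (h : R) (k d : idx) (i : 'I_3) : set pt :=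
  segment (vtx o h (k + d)) (vtx o h (k + d + eidx i)).
Definition is_edge_dir (o : pt) (h : R) (k : idx) (i : 'I_3) (E : set pt) : Prop :=
  exists d, [/\ bin d, d ord0 i = 0 & E = edge o h k d i].
Definition is_edge (o : pt) (h : R) (k : idx) (E : set pt) : Prop :=
  exists i, is_edge_dir o h k i E.
Definition face (o : pt) (h : R) (k : idx) (i : 'I_3) (s : 'I_2) : set pt :=
  [set x | cube o h k x /\ x ord0 i = vtx o h k ord0 i + (s : nat)%:R * h].
Definition face_bd (o : pt) (h : R) (k : idx) (i : 'I_3) (s : 'I_2) : set pt :=
  [set x | exists E, [/\ is_edge o h k E, E `<=` face o h k i s & E x]].

Definition C2_on (U : set pt) (phi : pt -> R) : Prop :=
  forall x, U x -> forall i j : 'I_3,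
    [/\ derivable phi x (ev i), derivable (pd i phi) x (ev j)
      & {for x, continuous (pd j (pd i phi))}].
Definition local_rep (G : set pt) (p : pt) (U : set pt) (phi : pt -> R) : Prop :=
  [/\ open U, U p, C2_on U phi,
      (forall x, U x -> (G x <-> phi x = 0))
    & (forall x, U x -> G x -> gradv phi x != 0)].
Definition C2_closed_surface (G : set pt) : Prop :=
  [/\ G !=set0, compact G & forall p, G p -> exists U phi, local_rep G p U phi].
Definition unit_normal (G : set pt) (p nu : pt) : Prop :=
  exists U phi, local_rep G p U phi /\ nu = (enorm (gradv phi p))^-1 *: gradv phi p.
Definition normal_segment (p nu : pt) (r : R) : set pt :=
  [set p + t *: nu | t in `[- r, r]%classic].
Definition reach_ok (G : set pt) (r : R) : Prop :=
  forall p q nup nuq, G p -> G q -> p <> q -> unit_normal G p nup ->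
    unit_normal G q nuq -> normal_segment p nup r `&` normal_segment q nuq r = set0.
Definition reach (G : set pt) : R := sup [set r | 0 < r /\ reach_ok G r].

Definition edge_pts (o : pt) (h : R) (k : idx) (G : set pt) : set pt :=
  [set x | G x /\ exists E, is_edge o h k E /\ E x].
Definition on_edge_dir (o : pt) (h : R) (k : idx) (i : 'I_3) (x : pt) : Prop :=
  exists E, is_edge_dir o h k i E /\ E x.
Definition face_cut (o : pt) (h : R) (k : idx) (G : set pt) (f : 'I_3 * 'I_2) : Prop :=
  face_bd o h k f.1 f.2 `&` G !=set0.
Definition nb_cut_faces (o : pt) (h : R) (k : idx) (G : set pt) : nat :=
  #|[pred f : 'I_3 * 'I_2 | `[< face_cut o h k G f >]]|.
Definition same_side (o : pt) (h : R) (k : idx) (G : set pt) (x y : pt) : Prop :=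
  exists S, [/\ connected S, S `<=` cube o h k `\` G, S x & S y].
Definition separates_edge (o : pt) (h : R) (k : idx) (G : set pt) (e : set pt) : Prop :=
  exists d i, [/\ bin d, d ord0 i = 0, e = edge o h k d i &
    let a := vtx o h (k + d) in let b := vtx o h (k + d + eidx i) in
    [/\ same_side o h k G a b,
        (forall c, is_vertex o h k c -> c <> a -> c <> b -> ~ same_side o h k G c a)
      & (forall c c', is_vertex o h k c -> is_vertex o h k c' -> c <> a -> c <> b ->
           c' <> a -> c' <> b -> same_side o h k G c c')]].
Definition share_face (o : pt) (h : R) (k : idx) (x y : pt) : Prop :=
  exists i s, face o h k i s x /\ face o h k i s y.

(* (D1, D2, D3) are the vertices of K_T selected by the rules of the paper *)
Definition KT_vertices (o : pt) (h : R) (k : idx) (G : set pt) (D1 D2 D3 : pt) : Prop :=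
  let P := edge_pts o h k G in
  let in3 := fun x => x = D1 \/ x = D2 \/ x = D3 in
  [/\ P D1, P D2 & P D3] /\ [/\ D1 <> D2, D1 <> D3 & D2 <> D3] /\
  [\/
      (nb_cut_faces o h k G = 3 /\ (forall x, P x -> in3 x)),
      (nb_cut_faces o h k G = 4 /\ exists e, separates_edge o h k G e /\
        (forall q, P q -> ~ in3 q ->
           [/\ dist_set q e <= dist_set D1 e, dist_set q e <= dist_set D2 e
             & dist_set q e <= dist_set D3 e])),
      (nb_cut_faces o h k G = 4 /\ exists i, forall x, P x -> on_edge_dir o h k i x)
    |
      (nb_cut_faces o h k G = 5 /\ exists i,
        [/\ on_edge_dir o h k i D1, on_edge_dir o h k i D2 & on_edge_dir o h k i D3])
    \/
      (nb_cut_faces o h k G = 6 /\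
        (exists i1 i2 i3, [/\ i1 != i2, i1 != i3 & i2 != i3] /\
            [/\ on_edge_dir o h k i1 D1, on_edge_dir o h k i2 D2 & on_edge_dir o h k i3 D3]) /\
        [/\ ~ share_face o h k D1 D2, ~ share_face o h k D1 D3 & ~ share_face o h k D2 D3])].

Definition omegaT (o : pt) (h : R) (M : seq idx) (k : idx) : set pt :=
  [set x | exists2 k', k' \in M & (cube o h k `&` cube o h k' !=set0) /\ cube o h k' x].

Definition CT (bm bp : R) (F nb D : pt) (p : pt -> R) : pt -> R :=
  fun x => p x + (bm / bp - 1) * grad_dot p F nb * dot (x - D) nb.

Definition setting (o : pt) (h : R) (M : seq idx) (Om Omm Omp G : set pt) : Prop :=
  0 < h /\ [/\
      Om = interior [set x | exists2 k, k \in M & cube o h k x],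
      connected Om,
      [/\ C2_closed_surface G, G `<=` Om, open Omm, open Omp &
          [/\ Omm `&` Omp = set0, Om `\` G = Omm `|` Omp,
              G `<=` closure Omm & G `<=` closure Omp]],
      h < reach G / (3 * Num.sqrt 3) &
      forall k, k \in M ->
        [/\ forall E, is_edge o h k E -> forall x y, G x -> G y -> E x -> E y -> x = y,
            forall i s x y z, G x -> G y -> G z -> face_bd o h k i s x ->
              face_bd o h k i s y -> face_bd o h k i s z -> x = y \/ x = z \/ y = z
          & forall x, is_vertex o h k x -> ~ G x]].

End Defs.

(* Main.v *)
Require Import Defs.
From HB Require Import structures.
From mathcomp Require Import all_boot all_order all_algebra.
From mathcomp Require Import all_classical all_reals all_analysis.
From mathcomp Require Import ring lra.
Import Order.TTheory GRing.Theory Num.Theory numFieldNormedType.Exports.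
Local Open Scope classical_set_scope.
Local Open Scope ring_scope.
Section S1.
Variable R : realType.

Lemma sum3 (T : Type) (idx : T) (op : Monoid.law idx) (F : 'I_3 -> T) :
  \big[op/idx]_(i < 3) F i = op (op (F i0) (F i1)) (F i2).
Proof.
rewrite !big_ord_recr big_ord0 /= Monoid.mul1m.
congr (op (op (F _) (F _)) (F _)); apply: val_inj => //=; by rewrite inordK.
Qed.

Lemma ev_coord (i j : 'I_3) (t : R) (x : pt R) :
  (t *: ev R i + x) ord0 j = t * (j == i)%:R + x ord0 j.
Proof. by rewrite /ev !mxE. Qed.

Lemma pd_aff (f : pt R -> R) i x b :
  (forall t, f (t *: ev R i + x) = f x + t * b) -> pd i f x = b.
Proof.
move=> H; rewrite /pd /derive.
apply/cvg_lim; first exact: Rhausdorff.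
apply: cvg_trans (cvg_cst b).
apply: near_eq_cvg; near=> t.
rewrite /= H addrC addKr.
have t0 : t != 0.
  near: t. exact: (@nbhs_dnbhs_neq R 0).
by rewrite /GRing.scale /= mulrA mulVf ?mul1r.
Unshelve. all: try by end_near. all: exact: _.
Qed.

Lemma ieq01 : (i0 == i1) = false. Proof. by apply: negbTE; apply/eqP => /(congr1 val); rewrite /= !inordK. Qed.
Lemma ieq10 : (i1 == i0) = false. Proof. by apply: negbTE; apply/eqP => /(congr1 val); rewrite /= !inordK. Qed.
Lemma ieq02 : (i0 == i2) = false. Proof. by apply: negbTE; apply/eqP => /(congr1 val); rewrite /= !inordK. Qed.
Lemma ieq20 : (i2 == i0) = false. Proof. by apply: negbTE; apply/eqP => /(congr1 val); rewrite /= !inordK. Qed.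
Lemma ieq12 : (i1 == i2) = false. Proof. by apply: negbTE; apply/eqP => /(congr1 val); rewrite /= !inordK. Qed.
Lemma ieq21 : (i2 == i1) = false. Proof. by apply: negbTE; apply/eqP => /(congr1 val); rewrite /= !inordK. Qed.

Definition tri (a0 a1 a2 a3 a4 a5 a6 a7 : R) (x : pt R) : R :=
  let x0 := x ord0 i0 in let x1 := x ord0 i1 in let x2 := x ord0 i2 in
  a0 + a1*x2 + a2*x1 + a3*x1*x2 + a4*x0 + a5*x0*x2 + a6*x0*x1 + a7*x0*x1*x2.

Lemma dtri0 a0 a1 a2 a3 a4 a5 a6 a7 :
  pd i0 (tri a0 a1 a2 a3 a4 a5 a6 a7) = tri a4 a5 a6 a7 0 0 0 0.
Proof.
apply: funext => x; apply: pd_aff => t.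
rewrite /tri !ev_coord eqxx ieq10 ieq20 /=; ring.
Qed.
Lemma dtri1 a0 a1 a2 a3 a4 a5 a6 a7 :
  pd i1 (tri a0 a1 a2 a3 a4 a5 a6 a7) = tri a2 a3 0 0 a6 a7 0 0.
Proof.
apply: funext => x; apply: pd_aff => t.
rewrite /tri !ev_coord eqxx ieq01 ieq21 /=; ring.
Qed.
Lemma dtri2 a0 a1 a2 a3 a4 a5 a6 a7 :
  pd i2 (tri a0 a1 a2 a3 a4 a5 a6 a7) = tri a1 0 a3 0 a5 0 a7 0.
Proof.
apply: funext => x; apply: pd_aff => t.
rewrite /tri !ev_coord eqxx ieq02 ieq12 /=; ring.
Qed.

Lemma Q1_tri (p : pt R -> R) : Q1 p -> exists a0 a1 a2 a3 a4 a5 a6 a7,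
  p = tri a0 a1 a2 a3 a4 a5 a6 a7.
Proof.
case=> c Hc.
pose o : 'I_2 := ord0; pose l : 'I_2 := lift ord0 ord0.
exists (c o o o), (c o o l), (c o l o), (c o l l), (c l o o), (c l o l), (c l l o), (c l l l).
apply: funext => x; rewrite Hc.
rewrite !big_ord_recl !big_ord0 /= /tri.
rewrite !expr0 !expr1 !mulr1 !addr0 /o /l; ring.
Qed.

Local Open Scope ereal_scope.
Lemma int_mono d (T : measurableType d) (mu : {measure set T -> \bar R})
  (f g : T -> \bar R) :
  (forall x, 0 <= f x) -> (forall x, f x <= g x) ->
  \int[mu]_x f x <= \int[mu]_x g x.
Proof.
move=> f0 fg.
rewrite !ge0_integralTE //; last by move=> x; exact: le_trans (f0 x) (fg x).
apply: ereal_sup_le => _ [h hf <-]; exists h => //= x.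
exact: le_trans (hf x) (fg x).
Qed.

Lemma int_lb d (T : measurableType d) (mu : {measure set T -> \bar R})
  (D B : set T) (f : T -> R) (c : R) : measurable B -> B `<=` D -> (0 <= c)%R ->
  (forall x, D x -> 0 <= f x)%R -> (forall x, B x -> c <= f x)%R ->
  c%:E * mu B <= \int[mu]_(x in D) (f x)%:E.
Proof.
move=> mB BD c0 f0 fc.
rewrite -integral_cst // integral_mkcond [X in _ <= X]integral_mkcond.
apply: int_mono => x; rewrite /patch /=.
  by case: ifP => // /set_mem Bx; rewrite lee_fin.
case: ifP => [/set_mem Bx|_].
  by rewrite mem_set ?lee_fin ?fc //; exact: BD.
by case: ifP => // /set_mem Dx; rewrite lee_fin f0.
Qed.

Lemma int_ub d (T : measurableType d) (mu : {measure set T -> \bar R})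
  (D B : set T) (f : T -> R) (c : R) : measurable B -> D `<=` B -> (0 <= c)%R ->
  (forall x, D x -> 0 <= f x <= c)%R ->
  \int[mu]_(x in D) (f x)%:E <= c%:E * mu B.
Proof.
move=> mB DB c0 fc.
rewrite -integral_cst // integral_mkcond [X in _ <= X]integral_mkcond.
apply: int_mono => x; rewrite /patch /=.
  by case: ifP => // /set_mem Dx; rewrite lee_fin; case/andP: (fc x Dx).
case: ifP => [/set_mem Dx|_].
  by rewrite mem_set ?lee_fin; [case/andP: (fc x Dx)|exact: DB].
by case: ifP => // _; rewrite lee_fin.
Qed.

Lemma leb_itv (a b : R) : (a <= b)%R -> lebesgue_measure (`[a, b]%classic : set R) = (b - a)%:E.
Proof.
move=> ab; have := lebesgue_measure_itv `[a, b]; rewrite /= => ->.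
rewrite lte_fin; case: ifP => [_|/negbT]; first by rewrite -EFinD.
rewrite -leNgt => ba.
have -> : b = a by apply/eqP; rewrite eq_le ab ba.
by rewrite subrr.

Qed.

Lemma leb2_box (a0 b0 a1 b1 : R) : (a0 <= b0)%R -> (a1 <= b1)%R ->
  @leb2 R (`[a0, b0]%classic `*` `[a1, b1]%classic) = ((b0 - a0) * (b1 - a1))%:E.
Proof.
move=> h0 h1; rewrite /leb2 product_measure1E //.
by rewrite EFinM -(leb_itv _ _ h0) -(leb_itv _ _ h1). Qed.

Lemma leb3_box (a0 b0 a1 b1 a2 b2 : R) : (a0 <= b0)%R -> (a1 <= b1)%R -> (a2 <= b2)%R ->
  @leb3 R ((`[a0, b0]%classic `*` `[a1, b1]%classic) `*` `[a2, b2]%classic) =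
  ((b0 - a0) * (b1 - a1) * (b2 - a2))%:E.
Proof.
move=> h0 h1 h2; rewrite /leb3 product_measure1E //; last exact: measurableX.
rewrite [X in (X * _)%E](_ : _ = ((b0 - a0) * (b1 - a1))%:E); last exact: leb2_box.
by rewrite [RHS]EFinM -(leb_itv _ _ h2).
Qed.
Local Close Scope ereal_scope.
End S1.
Section S2.
Variable R : realFieldType.

Lemma sq3 (x y z : R) : (x + y + z) ^+ 2 <= 3 * (x ^+ 2 + y ^+ 2 + z ^+ 2).
Proof.
rewrite -subr_ge0.
have -> : 3 * (x ^+ 2 + y ^+ 2 + z ^+ 2) - (x + y + z) ^+ 2 =
  (x - y) ^+ 2 + (y - z) ^+ 2 + (x - z) ^+ 2 by ring.
by rewrite !addr_ge0 ?sqr_ge0.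
Qed.

Lemma sqM_le (a b c : R) : a ^+ 2 <= b -> (a * c) ^+ 2 <= b * c ^+ 2.
Proof. by move=> h; rewrite exprMn ler_wpM2r ?sqr_ge0. Qed.

Lemma jump_bound (n0 n1 n2 y0 y1 y2 a01 a02 a12 d h : R) :
  n0 ^+ 2 <= 1 -> n1 ^+ 2 <= 1 -> n2 ^+ 2 <= 1 ->
  y0 ^+ 2 <= 4 * h ^+ 2 -> y1 ^+ 2 <= 4 * h ^+ 2 -> y2 ^+ 2 <= 4 * h ^+ 2 ->
  (n0 * (y1 * a01 + y2 * a02 + y1 * y2 * d) + n1 * (y0 * a01 + y2 * a12 + y0 * y2 * d)
   + n2 * (y0 * a02 + y1 * a12 + y0 * y1 * d)) ^+ 2 <=
  144 * h ^+ 2 * (a01 ^+ 2 + a02 ^+ 2 + a12 ^+ 2 + 3 * h ^+ 2 * d ^+ 2).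
Proof.
move=> hn0 hn1 hn2 hy0 hy1 hy2.
have yy : forall u v, u ^+ 2 <= 4 * h ^+ 2 -> v ^+ 2 <= 4 * h ^+ 2 ->
   (u * v) ^+ 2 <= 16 * h ^+ 4.
  move=> u v hu hv; rewrite exprMn.
  apply: le_trans (ler_pM (sqr_ge0 _) (sqr_ge0 _) hu hv) _.
  by rewrite le_eqVlt; apply/orP; left; apply/eqP; ring.
have nX : forall (n X : R), n ^+ 2 <= 1 -> (n * X) ^+ 2 <= X ^+ 2.
  move=> n X hn; rewrite exprMn.
  by rewrite -[leRHS]mul1r ler_wpM2r ?sqr_ge0.
have G : forall (u v a b : R), u ^+ 2 <= 4 * h ^+ 2 -> v ^+ 2 <= 4 * h ^+ 2 ->
    (u * a + v * b + u * v * d) ^+ 2 <= 3 * (4 * h ^+ 2 * a ^+ 2 + 4 * h ^+ 2 * b ^+ 2 + 16 * h ^+ 4 * d ^+ 2).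
  move=> u v a b hu hv; apply: le_trans (sq3 _ _ _) _.
  by rewrite ler_pM2l // !lerD ?sqM_le ?yy.
apply: le_trans (sq3 _ _ _) _.
apply: le_trans (_ : 3 * (
   3 * (4 * h ^+ 2 * a01 ^+ 2 + 4 * h ^+ 2 * a02 ^+ 2 + 16 * h ^+ 4 * d ^+ 2) +
   3 * (4 * h ^+ 2 * a01 ^+ 2 + 4 * h ^+ 2 * a12 ^+ 2 + 16 * h ^+ 4 * d ^+ 2) +
   3 * (4 * h ^+ 2 * a02 ^+ 2 + 4 * h ^+ 2 * a12 ^+ 2 + 16 * h ^+ 4 * d ^+ 2)) <= _).
  rewrite ler_pM2l // !lerD //; apply: le_trans (nX _ _ _) (G _ _ _ _ _ _) => //.
rewrite -subr_ge0.
have -> : 144 * h ^+ 2 * (a01 ^+ 2 + a02 ^+ 2 + a12 ^+ 2 + 3 * h ^+ 2 * d ^+ 2) -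
  3 * (3 * (4 * h ^+ 2 * a01 ^+ 2 + 4 * h ^+ 2 * a02 ^+ 2 + 16 * h ^+ 4 * d ^+ 2) +
   3 * (4 * h ^+ 2 * a01 ^+ 2 + 4 * h ^+ 2 * a12 ^+ 2 + 16 * h ^+ 4 * d ^+ 2) +
   3 * (4 * h ^+ 2 * a02 ^+ 2 + 4 * h ^+ 2 * a12 ^+ 2 + 16 * h ^+ 4 * d ^+ 2))
  = 72 * ((h * a01) ^+ 2 + (h * a02) ^+ 2 + (h * a12) ^+ 2) by ring.
by rewrite mulr_ge0 // !addr_ge0 ?sqr_ge0.
Qed.
End S2.
Section S3.
Variable R : realFieldType.
Lemma sq_le_abs (A B : R) : B^+2 <= A^+2 -> `|B| <= `|A|.
Proof. by rewrite -[B^+2]real_normK ?num_real // -[A^+2]real_normK ?num_real // ler_sqr // qualifE /=. Qed.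
Lemma KL (A B s : R) : 0 <= s -> s <= 1/4 -> B^+2 <= A^+2 -> A^+2/4 <= (A + s*(B-A))^+2.
Proof.
move=> s0 s1 /sq_le_abs; case: (lerP 0 A) => hA.
  rewrite (ger0_norm hA) ler_norml => /andP[h1 h2].
  have hv : A / 2 <= A + s * (B - A) by nra.
  nra.
rewrite (ltr0_norm hA) ler_norml opprK => /andP[h1 h2].
have hv : A + s * (B - A) <= A / 2 by nra.
nra.
Qed.
Lemma KB (A B s : R) : 0 <= s -> s <= 1 -> B^+2 <= A^+2 -> (A + s*(B-A))^+2 + (B-A)^+2 <= 5 * A^+2.
Proof.
move=> s0 s1 hAB.
have h2 : (B - A)^+2 <= 4 * A^+2.
  have : 0 <= (A + B)^+2 by apply: sqr_ge0.
  nra.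
suff : (A + s*(B-A))^+2 <= A^+2 by lra.
move/sq_le_abs: hAB; case: (lerP 0 A) => hA.
  rewrite (ger0_norm hA) ler_norml => /andP[h1 h3].
  have hv : - A <= A + s * (B - A) <= A by apply/andP; split; nra.
  by rewrite -[A^+2]real_normK ?num_real // -[X in X <= _]real_normK ?num_real // ler_sqr ?qualifE /= ?normr_ge0 // (ger0_norm hA) ler_norml.
rewrite (ltr0_norm hA) ler_norml opprK => /andP[h1 h3].
have hv : A <= A + s * (B - A) <= - A by apply/andP; split; nra.
by rewrite -[A^+2]real_normK ?num_real // -[X in X <= _]real_normK ?num_real // ler_sqr ?qualifE /= ?normr_ge0 // (ltr0_norm hA) ler_norml opprK.
Qed.

Lemma aff_lb (al d F a h : R) : 0 < h -> a <= F -> F <= a + h -> exists s,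
  [/\ a <= s, s + h/4 <= a + h & forall t, s <= t -> t <= s + h/4 ->
     (al^+2 + h^+2 * d^+2)/20 <= (al + d*(t - F))^+2].
Proof.
move=> h0 aF Fa.
have hn0 : h != 0 by rewrite gt_eqF.
pose A := al + d*(a-F); pose B := al + d*(a+h-F).
have ehd : h^+2 * d^+2 = (B-A)^+2 by rewrite /A /B; ring.
have frac : forall x c, 0 <= x -> x <= c * h -> 0 <= x/h /\ x/h <= c.
  by move=> x c x0 xc; split; [rewrite divr_ge0 // ltW | rewrite ler_pdivrMr].
have ealA : al = A + ((F-a)/h)*(B-A) by rewrite /A /B; field.
have ealB : al = B + ((a+h-F)/h)*(A-B) by rewrite /A /B; field.
case: (lerP (B^+2) (A^+2)) => hAB.
  exists a; split => [||t t1 t2]; first by [].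
    by lra.
  have et : al + d*(t-F) = A + ((t-a)/h)*(B-A) by rewrite /A /B; field.
  have [s0 s1] := frac (t - a) (1/4) ltac:(lra) ltac:(lra).
  have [u0 u1] := frac (F - a) 1 ltac:(lra) ltac:(lra).
  rewrite et; apply: (le_trans _ (KL _ _ _ s0 s1 hAB)).
  have := KB _ _ _ u0 u1 hAB; rewrite -ealA -ehd; lra.
exists (a + 3 * h / 4); split => [||t t1 t2]; first by lra.
  by lra.
have et : al + d*(t-F) = B + ((a+h-t)/h)*(A-B) by rewrite /A /B; field.
have [s0 s1] := frac (a + h - t) (1/4) ltac:(lra) ltac:(lra).
have [u0 u1] := frac (a + h - F) 1 ltac:(lra) ltac:(lra).
have hBA := ltW hAB.
rewrite et; apply: (le_trans _ (KL _ _ _ s0 s1 hBA)).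
have := KB _ _ _ u0 u1 hBA; rewrite -ealB.
have -> : (A - B)^+2 = h^+2 * d^+2 by rewrite ehd; ring.
lra.
Qed.
End S3.
Section S4.
Variable R : realType.

Lemma ord3 (j : 'I_3) : j = i0 \/ j = i1 \/ j = i2.
Proof.
case: j => [[|[|[|n]]] Hn].
- by left; apply: val_inj; rewrite /= inordK.
- by right; left; apply: val_inj; rewrite /= inordK.
- by right; right; apply: val_inj; rewrite /= inordK.
- by [].
Qed.

Lemma mk3_0 (x y z : R) : mk3 x y z ord0 i0 = x.
Proof. by rewrite /mk3 mxE /i0 inordK. Qed.
Lemma mk3_1 (x y z : R) : mk3 x y z ord0 i1 = y.
Proof. by rewrite /mk3 mxE /i1 inordK. Qed.
Lemma mk3_2 (x y z : R) : mk3 x y z ord0 i2 = z.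
Proof. by rewrite /mk3 mxE /i2 inordK. Qed.

Lemma vtx_coord (o : pt R) h (k : idx) j :
  vtx o h k ord0 j = o ord0 j + h * (k ord0 j)%:~R.
Proof. by rewrite /vtx /ivec !mxE. Qed.

Lemma edge_in_cube (o : pt R) h (k : idx) E x : 0 < h ->
  is_edge o h k E -> E x -> cube o h k x.
Proof.
move=> h0 [i [d [bd di ->]]] [t /= t01 <-] j.
rewrite /vtx /ivec /eidx !mxE !intrD eqxx /=.
rewrite !in_itv /= in t01; case/andP: t01 => t0 t1.
case: (eqVneq j i) => [->|ji].
  rewrite di /= ?mulr1n ?mulr0n ?intr0 ?rmorph1 ?rmorph0.
  apply/andP; split; nra.
rewrite /= ?mulr1n ?mulr0n ?intr0 ?rmorph1 ?rmorph0.
case: (bd j) => ->; rewrite ?intr0 ?rmorph1; apply/andP; split; nra.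
Qed.
End S4.

Section S5.
Variable R : realType.

Lemma dot3 (u v : pt R) : dot u v =
  u ord0 i0 * v ord0 i0 + u ord0 i1 * v ord0 i1 + u ord0 i2 * v ord0 i2.
Proof. by rewrite /dot sum3. Qed.

Lemma enorm1 (v : pt R) : enorm v = 1 ->
  v ord0 i0 ^+ 2 + v ord0 i1 ^+ 2 + v ord0 i2 ^+ 2 = 1.
Proof.
move=> hv.
have d0 : 0 <= dot v v by rewrite dot3 -!expr2 !addr_ge0 ?sqr_ge0.
have : dot v v = 1 by rewrite -(sqr_sqrtr d0) -/(enorm v) hv expr1n.
by rewrite dot3 -!expr2.
Qed.

Lemma sqb (y c : R) : - c <= y -> y <= c -> y ^+ 2 <= c ^+ 2.
Proof. move=> *; nra. Qed.

Lemma zu_bd (z u c : R) : - c <= z -> z <= c -> u ^+ 2 <= 1 -> - c <= z * u /\ z * u <= c.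
Proof.
move=> h1 h2 hu.
have hu' : `|u| <= 1 by rewrite -(normr1 R); apply: sq_le_abs; rewrite expr1n.
have hz : `|z| <= c by rewrite ler_norml h1.
have : `|z * u| <= c.
  rewrite normrM; apply: le_trans (_ : `|z| * 1 <= c); last by rewrite mulr1.
  by rewrite ler_wpM2l.
by rewrite ler_norml => /andP[].
Qed.

Lemma plane_bd (q1 q2 u0 u1 u2 w0 w1 w2 c : R) :
  u0 ^+ 2 + u1 ^+ 2 + u2 ^+ 2 = 1 -> w0 ^+ 2 + w1 ^+ 2 + w2 ^+ 2 = 1 ->
  u0 * w0 + u1 * w1 + u2 * w2 = 0 ->
  - c <= q1 * u0 + q2 * w0 <= c -> - c <= q1 * u1 + q2 * w1 <= c ->
  - c <= q1 * u2 + q2 * w2 <= c ->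
  (- (3 * c) <= q1 <= 3 * c) /\ (- (3 * c) <= q2 <= 3 * c).
Proof.
move=> hu hw huw /andP[a0 b0] /andP[a1 b1] /andP[a2 b2].
have s0 := sqr_ge0 u0; have s1 := sqr_ge0 u1; have s2 := sqr_ge0 u2.
have s3 := sqr_ge0 w0; have s4 := sqr_ge0 w1; have s5 := sqr_ge0 w2.
have u0b : u0 ^+ 2 <= 1 by lra. have u1b : u1 ^+ 2 <= 1 by lra.
have u2b : u2 ^+ 2 <= 1 by lra. have w0b : w0 ^+ 2 <= 1 by lra.
have w1b : w1 ^+ 2 <= 1 by lra. have w2b : w2 ^+ 2 <= 1 by lra.
have e1 : q1 = (q1 * u0 + q2 * w0) * u0 + (q1 * u1 + q2 * w1) * u1 + (q1 * u2 + q2 * w2) * u2.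
  transitivity (q1 * (u0 ^+ 2 + u1 ^+ 2 + u2 ^+ 2) + q2 * (u0 * w0 + u1 * w1 + u2 * w2)).
    by rewrite hu huw; ring.
  by ring.
have e2 : q2 = (q1 * u0 + q2 * w0) * w0 + (q1 * u1 + q2 * w1) * w1 + (q1 * u2 + q2 * w2) * w2.
  transitivity (q2 * (w0 ^+ 2 + w1 ^+ 2 + w2 ^+ 2) + q1 * (u0 * w0 + u1 * w1 + u2 * w2)).
    by rewrite hw huw; ring.
  by ring.
have [c0 d0] := zu_bd _ _ _ a0 b0 u0b. have [c1 d1] := zu_bd _ _ _ a1 b1 u1b.
have [c2 d2] := zu_bd _ _ _ a2 b2 u2b.
have [c3 d3] := zu_bd _ _ _ a0 b0 w0b. have [c4 d4] := zu_bd _ _ _ a1 b1 w1b.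
have [c5 d5] := zu_bd _ _ _ a2 b2 w2b.
split; apply/andP; split.
- by rewrite {1}e1; lra.
- by rewrite {1}e1; lra.
- by rewrite {1}e2; lra.
- by rewrite {1}e2; lra.
Qed.

Lemma box_lb (A : set (pt R)) (g : pt R -> R) (l0 r0 l1 r1 l2 r2 c : R) :
  l0 <= r0 -> l1 <= r1 -> l2 <= r2 -> 0 <= c ->
  (forall x y z, l0 <= x <= r0 -> l1 <= y <= r1 -> l2 <= z <= r2 ->
     A (mk3 x y z) /\ c <= g (mk3 x y z) ^+ 2) ->
  ((c * ((r0 - l0) * (r1 - l1) * (r2 - l2)))%:E <= int3 A (fun x => (g x ^+ 2)%R))%E.
Proof.
move=> h0 h1 h2 c0 H.
rewrite EFinM -leb3_box //; apply: int_lb => //.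
- by apply: measurableX; [apply: measurableX|]; exact: measurable_itv.
- move=> [[x y] z] /= [[hx hy] hz]; rewrite /= !in_itv /= in hx hy hz.
  by have [] := H x y z hx hy hz.
- by move=> q _; rewrite sqr_ge0.
- move=> [[x y] z] /= [[hx hy] hz]; rewrite /= !in_itv /= in hx hy hz.
  by have [] := H x y z hx hy hz.
Qed.
End S5.

Lemma dsum3 (R : realType) (g : 'I_3 -> 'I_3 -> \bar R) : (forall i j, 0 <= g i j)%E ->
  (g i0 i1 + g i0 i2 + g i1 i2 <= \sum_(i < 3) \sum_(j < 3) g i j)%E.
Proof.
move=> g0.
rewrite sum3 !sum3.
apply: (@le_trans _ _ ((((0 + g i0 i1) + g i0 i2) + ((0 + 0) + g i1 i2)) + ((0 + 0) + 0))%E).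
  by rewrite !add0e adde0.
by repeat (apply: leeD); rewrite ?lexx ?g0.
Qed.

Theorem lemma4p5 (R : realType) :
  exists C : R, forall (o : pt R) (h : R) (M : seq (idx)) (Om Omm Omp G : set (pt R))
    (bm bp : R) (k : idx) (D1 D2 D3 nb u w : pt R) (p : pt R -> R),
    setting o h M Om Omm Omp G ->
    0 < bm -> bm <= bp ->
    (* T = cube o h k is an interface element *)
    k \in M -> cube o h k `&` G !=set0 ->
    (* K_T, its plane tau(T), unit normal nb *)
    KT_vertices o h k G D1 D2 D3 ->
    enorm nb = 1 -> dot nb (D2 - D1) = 0 -> dot nb (D3 - D1) = 0 ->
    (* (u, w) an orthonormal frame of tau(T) *)
    enorm u = 1 -> enorm w = 1 -> dot u w = 0 -> dot u nb = 0 -> dot w nb = 0 ->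
    Q1 p ->
    let F := (3%:R)^-1 *: (D1 + D2 + D3) in
    let vm := p in
    let vp := CT bm bp F nb D1 p in
    let omega := omegaT o h M k in
    let jump := fun x => bp * grad_dot vp x nb - bm * grad_dot vm x nb in
    (planeL2_sq D1 u w omega jump <= ((C * (bp - bm)) ^+ 2 * h)%:E * H2semi_sq omega vp)%E /\
    (planeL2_sq D1 u w omega jump <= ((C * (bp - bm)) ^+ 2 * h)%:E * H2semi_sq omega vm)%E.
Proof.
exists (9 * 144).
move=> o h M Om Omm Omp G bm bp k D1 D2 D3 nb u w p Hset bm0 bmp kM _ KT hnb _ _
  hu hw huw _ _ Qp F vm vp omega jump.
have h0 : 0 < h by case: Hset.
have bp0 : 0 < bp := lt_le_trans bm0 bmp.
move: KT; rewrite /KT_vertices => -[[[_ [E1 [iE1 E1D]]] [_ [E2 [iE2 E2D]]] [_ [E3 [iE3 E3D]]]] _].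
have c1 := @edge_in_cube _ _ _ _ _ _ h0 iE1 E1D.
have c2 := @edge_in_cube _ _ _ _ _ _ h0 iE2 E2D.
have c3 := @edge_in_cube _ _ _ _ _ _ h0 iE3 E3D.
have eF : forall j, F ord0 j = 3^-1 * (D1 ord0 j + D2 ord0 j + D3 ord0 j).
  by move=> j; rewrite /F !mxE.
have cF : forall j, vtx o h k ord0 j <= F ord0 j <= vtx o h k ord0 j + h.
  move=> j; rewrite eF.
  move: (c1 j) (c2 j) (c3 j) => /andP[p1 p2] /andP[p3 p4] /andP[p5 p6].
  apply/andP; split; lra.
have hom : forall x, omega x -> forall j,
    (- (2 * h) <= x ord0 j - F ord0 j <= 2 * h) /\
    (- (2 * h) <= x ord0 j - D1 ord0 j <= 2 * h).
  move=> x [k' _ [[y [cy cy']] cx]] j.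
  move: (cy j) (cy' j) (cx j) (cF j) (c1 j) => /andP[p1 p2] /andP[p3 p4] /andP[p5 p6] /andP[p7 p8] /andP[p9 p10].
  split; apply/andP; split; lra.
have com : forall x, cube o h k x -> omega x.
  by move=> x cx; exists k => //; split => //; exists x.
have [a0 [a1 [a2 [a3 [a4 [a5 [a6 [a7 Ep]]]]]]]] := @Q1_tri _ _ Qp.
have hN := @enorm1 _ _ hnb.
set n0 := nb ord0 i0 in hN *; set n1 := nb ord0 i1 in hN *; set n2 := nb ord0 i2 in hN *.
set F0 := F ord0 i0; set F1 := F ord0 i1; set F2 := F ord0 i2.
pose gF := (a4 + a5 * F2 + a6 * F1 + a7 * F1 * F2) * n0 +
   (a2 + a3 * F2 + a6 * F0 + a7 * F0 * F2) * n1 +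
   (a1 + a3 * F1 + a5 * F0 + a7 * F0 * F1) * n2.
have egF : grad_dot p F nb = gF.
  by rewrite /grad_dot sum3 /= Ep dtri0 dtri1 dtri2 /tri -/n0 -/n1 -/n2 -/F0 -/F1 -/F2 /gF; ring.
pose kap := (bm / bp - 1) * gF.
pose dD := D1 ord0 i0 * n0 + D1 ord0 i1 * n1 + D1 ord0 i2 * n2.
have Evp : vp = tri R (a0 - kap * dD) (a1 + kap * n2) (a2 + kap * n1) a3 (a4 + kap * n0) a5 a6 a7.
  apply: funext => x; rewrite /vp /CT egF -/kap dot3 !mxE Ep /tri /dD -/n0 -/n1 -/n2; ring.
pose al01 := a6 + a7 * F2; pose al02 := a5 + a7 * F1; pose al12 := a3 + a7 * F0.
pose Br (x : pt R) := let y0 := x ord0 i0 - F0 in let y1 := x ord0 i1 - F1 in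
  let y2 := x ord0 i2 - F2 in
  n0 * (y1 * al01 + y2 * al02 + y1 * y2 * a7) + n1 * (y0 * al01 + y2 * al12 + y0 * y2 * a7)
  + n2 * (y0 * al02 + y1 * al12 + y0 * y1 * a7).
have hk : bp * (bm / bp - 1) = bm - bp.
  by field; rewrite gt_eqF.
have eJ : forall x, jump x = (bp - bm) * Br x.
  move=> x; rewrite /jump /vm Evp Ep /grad_dot !sum3 /= !dtri0 !dtri1 !dtri2 /tri -/n0 -/n1 -/n2.
  transitivity ((bp - bm) * Br x + (bp - bm) * gF + bp * kap * (n0 ^+ 2 + n1 ^+ 2 + n2 ^+ 2)).
    by rewrite /Br /al01 /al02 /al12 /gF; ring.
  by rewrite hN mulr1 /kap mulrA hk; ring.
pose S := al01 ^+ 2 + al02 ^+ 2 + al12 ^+ 2 + 3 * h ^+ 2 * a7 ^+ 2.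
have S0 : 0 <= S.
  rewrite /S; apply: addr_ge0; last by apply: mulr_ge0; [apply: mulr_ge0|]; rewrite ?sqr_ge0.
  by apply: addr_ge0; [apply: addr_ge0|]; exact: sqr_ge0.
have nb1 : [/\ n0 ^+ 2 <= 1, n1 ^+ 2 <= 1 & n2 ^+ 2 <= 1].
  by have := sqr_ge0 n0; have := sqr_ge0 n1; have := sqr_ge0 n2; split; lra.
have Jb : forall x, omega x -> jump x ^+ 2 <= (bp - bm) ^+ 2 * (144 * h ^+ 2 * S).
  move=> x ox; rewrite eJ exprMn; apply: ler_wpM2l; first exact: sqr_ge0.
  have yb : forall j, (x ord0 j - F ord0 j) ^+ 2 <= 4 * h ^+ 2.
    move=> j; have [/andP[l r] _] := hom x ox j.
    by have := @sqb R _ _ l r; rewrite exprMn (_ : 2 ^+ 2 = 4) //; ring.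
  case: nb1 => ? ? ?.
  rewrite /Br /S; apply: (@jump_bound R) => //; exact: yb.
have hu' := @enorm1 _ _ hu; have hw' := @enorm1 _ _ hw.
have huw' := huw; rewrite dot3 in huw'.
have c0 : 0 <= (bp - bm) ^+ 2 * (144 * h ^+ 2 * S).
  by apply: mulr_ge0; [exact: sqr_ge0| apply: mulr_ge0 => //; apply: mulr_ge0 => //; exact: sqr_ge0].
have PL : (planeL2_sq D1 u w omega jump <=
   ((bp - bm) ^+ 2 * (144 * h ^+ 2 * S) * ((6 * h - - (6 * h)) * (6 * h - - (6 * h))))%:E)%E.
  rewrite /planeL2_sq EFinM -(@leb2_box R (- (6 * h)) (6 * h) (- (6 * h)) (6 * h)); [|lra|lra].
  rewrite /leb2; apply: int_ub.
  - by apply: measurableX; exact: measurable_itv.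
  - move=> [q1 q2] /= ox.
    have ec : forall j, (D1 + q1 *: u + q2 *: w) ord0 j - D1 ord0 j = q1 * u ord0 j + q2 * w ord0 j.
      by move=> j; rewrite !mxE; ring.
    have hb : forall j, - (2 * h) <= q1 * u ord0 j + q2 * w ord0 j <= 2 * h.
      by move=> j; rewrite -ec; case: (hom _ ox j).
    have [/andP[l1 r1] /andP[l2 r2]] := @plane_bd R _ _ _ _ _ _ _ _ _ hu' hw' huw' (hb i0) (hb i1) (hb i2).
    by split; rewrite /= in_itv /=; apply/andP; split; lra.
  - exact: c0.
  - by move=> q ox; rewrite sqr_ge0 /=; exact: Jb.
have pairlb : forall (g : pt R -> R) (j : 'I_3) al,
   (forall x, g x = al + a7 * (x ord0 j - F ord0 j)) ->
   (((al ^+ 2 + h ^+ 2 * a7 ^+ 2) / 20 * (h * h * (h / 4)))%:E <=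
     int3 omega (fun x => (g x ^+ 2)%R))%E.
  move=> g j al Hg.
  have cl : 0 <= (al ^+ 2 + h ^+ 2 * a7 ^+ 2) / 20.
    by apply: divr_ge0 => //; apply: addr_ge0; [|apply: mulr_ge0]; exact: sqr_ge0.
  have [/andP[l r]] := cF j.
  have [s [sl sr sH]] := @aff_lb R al a7 (F ord0 j) (vtx o h k ord0 j) h h0 l r.
  have cb := fun jj => cF jj.
  set L0 := vtx o h k ord0 i0; set L1 := vtx o h k ord0 i1; set L2 := vtx o h k ord0 i2.
  have cubeP : forall x y z, L0 <= x <= L0 + h -> L1 <= y <= L1 + h -> L2 <= z <= L2 + h ->
      omega (mk3 x y z).
    move=> x y z hx hy hz; apply: com => jj.
    by case: (ord3 jj) => [->|[->|->]]; rewrite ?mk3_0 ?mk3_1 ?mk3_2.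
  have LH : forall L, L <= L + h by move=> L; lra.
  move: sl sr sH Hg; case: (ord3 j) => [->|[->|->]] sl sr sH Hg.
  - rewrite (_ : h * h * (h / 4) = (s + h / 4 - s) * (L1 + h - L1) * (L2 + h - L2)); last by ring.
    apply: box_lb => //; try lra.
    move=> x y z /andP[hx1 hx2] hy hz; split.
      by apply: cubeP => //; apply/andP; split; rewrite /L0; lra.
    by rewrite Hg mk3_0; apply: sH.
  - rewrite (_ : h * h * (h / 4) = (L0 + h - L0) * (s + h / 4 - s) * (L2 + h - L2)); last by ring.
    apply: box_lb => //; try lra.
    move=> x y z hx /andP[hy1 hy2] hz; split.
      by apply: cubeP => //; apply/andP; split; rewrite /L1; lra.
    by rewrite Hg mk3_1; apply: sH.
  - rewrite (_ : h * h * (h / 4) = (L0 + h - L0) * (L1 + h - L1) * (s + h / 4 - s)); last by ring.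
    apply: box_lb => //; try lra.
    move=> x y z hx hy /andP[hz1 hz2]; split.
      by apply: cubeP => //; apply/andP; split; rewrite /L2; lra.
    by rewrite Hg mk3_2; apply: sH.
have H2lb : forall b0 b1 b2 b4,
    ((h ^+ 3 * S / 80)%:E <= H2semi_sq omega (tri R b0 b1 b2 a3 b4 a5 a6 a7))%E.
  move=> b0 b1 b2 b4; rewrite /H2semi_sq.
  have g0 : forall i j, (0 <= int3 omega (fun x => (pd i (pd j (tri R b0 b1 b2 a3 b4 a5 a6 a7)) x ^+ 2)%R))%E.
    by move=> i j; apply: integral_ge0 => x _; rewrite lee_fin sqr_ge0.
  apply: (le_trans _ (@dsum3 R (fun i j => int3 omega (fun x => (pd i (pd j (tri R b0 b1 b2 a3 b4 a5 a6 a7)) x ^+ 2)%R)) g0)).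
  rewrite !dtri1 !dtri2 !dtri0 !dtri1.
  have P01 := pairlb (tri R a6 a7 0 0 0 0 0 0) i2 al01
    ltac:(by move=> x; rewrite /tri /al01 /F2; ring).
  have P02 := pairlb (tri R a5 0 a7 0 0 0 0 0) i1 al02
    ltac:(by move=> x; rewrite /tri /al02 /F1; ring).
  have P12 := pairlb (tri R a3 0 0 0 a7 0 0 0) i0 al12
    ltac:(by move=> x; rewrite /tri /al12 /F0; ring).
  apply: le_trans; last exact: (leeD (leeD P01 P02) P12).
  rewrite -!EFinD lee_fin /S le_eqVlt; apply/orP; left; apply/eqP; by field.
have key : forall H, ((h ^+ 3 * S / 80)%:E <= H)%E ->
    (planeL2_sq D1 u w omega jump <= ((9 * 144 * (bp - bm)) ^+ 2 * h)%:E * H)%E.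
  move=> H hH; apply: le_trans PL _.
  apply: (@le_trans _ _ (((9 * 144 * (bp - bm)) ^+ 2 * h)%:E * (h ^+ 3 * S / 80)%:E)%E).
    rewrite -EFinM lee_fin -subr_ge0.
    have -> : (9 * 144 * (bp - bm)) ^+ 2 * h * (h ^+ 3 * S / 80) -
      (bp - bm) ^+ 2 * (144 * h ^+ 2 * S) * ((6 * h - - (6 * h)) * (6 * h - - (6 * h))) =
      (144 * 144 / 80) * ((bp - bm) ^+ 2 * h ^+ 4 * S) by field.
    apply: mulr_ge0; first by apply: divr_ge0.
    apply: mulr_ge0 => //; apply: mulr_ge0; first exact: sqr_ge0.
    by apply: exprn_ge0; exact: ltW.
  apply: lee_wpmul2l; last exact: hH.
  by rewrite lee_fin; apply: mulr_ge0; [exact: sqr_ge0 | exact: ltW].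
split; apply: key.
  by rewrite Evp; exact: H2lb.
have e : vm = tri R a0 a1 a2 a3 a4 a5 a6 a7 := Ep.
by rewrite e; exact: H2lb.
Qed.
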